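(* There exists a set $\mathcal{A} = \{a_1,a_2,a_3,\ldots\}$ of positive integers such that (i) every positive integer $n \notin \{2,3,7,11,15\}$ has a Wilf partition that is a fixed point of the involution $\iota$ and in which every part size and every multiplicity belongs to $\mathcal{A}$; and (ii) $|\mathcal{A} \cap [1,m]| = O(\log m)$ as $m \to \infty$.
   Context: A Wilf partition of a positive integer $n$ is an integer partition of $n$ in which all nonzero multiplicities are distinct. Writing a partition as the set of its part–multiplicity pairs $(p_i,m_i)$ (meaning the part $p_i$ occurs exactly $m_i\ge 1$ times, the $p_i$ being distinct), the involution $\iota$ on Wilf partitions interchanges part sizes and multiplicities, sending the partition with pairs $\{(p_i,m_i)\}$ to the one with pairs $\{(m_i,p_i)\}$. A fixed point of $\iota$ is a Wilf partition such that whenever $(p,m)$ is one of its part–multiplicity pairs, so is $(m,p)$. *)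

(* Defs.v *)
From mathcomp Require Import all_boot.
From Stdlib Require Import Rdefinitions Raxioms Rfunctions Rpower.

Set Implicit Arguments.
Unset Strict Implicit.
Unset Printing Implicit Defensive.

(* A partition is encoded by the sequence of its part–multiplicity pairs
   (p, m): part p occurs exactly m times. *)
Definition is_partition_pm (n : nat) (s : seq (nat * nat)) : bool :=
  [&& all (fun pm => (0 < pm.1) && (0 < pm.2)) s,
      uniq (map fst s)
    & \sum_(pm <- s) pm.1 * pm.2 == n].

Definition is_wilf_partition (n : nat) (s : seq (nat * nat)) : bool :=
  is_partition_pm n s && uniq (map snd s).

Definition iota_fixed (s : seq (nat * nat)) : bool :=
  all (fun pm => (pm.2, pm.1) \in s) s.

Definition count_upto (A : pred nat) (m : nat) : nat := count A (iota 1 m).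

(* Main.v *)
Require Import Defs.
From mathcomp Require Import all_boot.
From Stdlib Require Import Rdefinitions Raxioms Rfunctions Rpower.
From Stdlib Require Import RIneq Lra.
From mathcomp Require Import zify.

Definition A : pred nat := fun x => (0 < x) && (x %/ expn 2 (logn 2 x) <= 7).
Definition table : seq (seq (nat*nat)) := [:: [::];
 [::(1,1)];
 [::];
 [::];
 [::(1,2);(2,1)];
 [::(1,1);(2,2)];
 [::(1,3);(3,1)];
 [::];
 [::(1,4);(4,1)];
 [::(3,3)];
 [::(1,1);(3,3)];
 [::];
 [::(1,4);(4,1);(2,2)];
 [::(1,1);(2,3);(3,2)];
 [::(1,1);(2,2);(3,3)];
 [::];
 [::(1,6);(6,1);(2,2)];
 [::(1,1);(2,4);(4,2)];
 [::(1,7);(7,1);(2,2)];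
 [::(1,5);(5,1);(3,3)];
 [::(1,2);(2,1);(4,4)];
 [::(1,1);(2,2);(4,4)];
 [::(1,3);(3,1);(2,4);(4,2)];
 [::(1,5);(5,1);(2,2);(3,3)];
 [::(1,6);(6,1);(2,3);(3,2)];
 [::(1,1);(2,6);(6,2)];
 [::(1,1);(2,4);(4,2);(3,3)];
 [::(1,7);(7,1);(2,2);(3,3)];
 [::(1,2);(2,1);(3,4);(4,3)];
 [::(1,1);(2,2);(3,4);(4,3)];
 [::(1,1);(2,2);(3,3);(4,4)];
 [::(1,1);(3,5);(5,3)];
 [::(1,4);(4,1);(2,6);(6,2)];
 [::(1,1);(2,8);(8,2)];
 [::(1,1);(2,6);(6,2);(3,3)];
 [::(1,1);(2,2);(3,5);(5,3)];
 [::(1,4);(4,1);(2,7);(7,2)];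
 [::(1,1);(2,5);(5,2);(4,4)];
 [::(1,1);(2,3);(3,2);(5,5)];
 [::(1,1);(2,2);(3,3);(5,5)];
 [::(1,2);(2,1);(3,6);(6,3)];
 [::(1,1);(2,2);(3,6);(6,3)];
 [::(1,1);(2,4);(4,2);(5,5)];
 [::(1,1);(3,7);(7,3)];
 [::(1,2);(2,1);(4,5);(5,4)];
 [::(1,1);(2,2);(4,5);(5,4)];
 [::(1,1);(2,2);(4,4);(5,5)];
 [::(1,1);(2,2);(3,7);(7,3)];
 [::(1,4);(4,1);(2,2);(3,6);(6,3)];
 [::(1,1);(2,3);(3,2);(6,6)];
 [::(1,1);(2,2);(3,3);(6,6)];
 [::(1,1);(2,2);(3,5);(5,3);(4,4)];
 [::(1,2);(2,1);(3,8);(8,3)];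
 [::(1,1);(2,2);(3,8);(8,3)];
 [::(1,1);(2,2);(3,3);(4,5);(5,4)];
 [::(1,1);(2,2);(3,3);(4,4);(5,5)];
 [::(1,2);(2,1);(3,6);(6,3);(4,4)];
 [::(1,1);(2,2);(3,6);(6,3);(4,4)];
 [::(1,1);(2,8);(8,2);(3,3);(4,4)];
 [::(1,1);(2,4);(4,2);(3,7);(7,3)];
 [::(1,2);(2,1);(4,7);(7,4)];
 [::(1,1);(2,2);(4,7);(7,4)];
 [::(1,1);(2,2);(3,3);(4,6);(6,4)];
 [::(1,1);(2,2);(3,3);(7,7)];
 [::(1,2);(2,1);(3,4);(4,3);(6,6)];
 [::(1,1);(2,2);(3,4);(4,3);(6,6)];
 [::(1,1);(2,2);(3,3);(4,4);(6,6)];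
 [::(1,1);(2,6);(6,2);(3,7);(7,3)];
 [::(1,1);(3,7);(7,3);(5,5)];
 [::(1,1);(2,2);(3,8);(8,3);(4,4)];
 [::(1,1);(2,2);(3,3);(4,7);(7,4)];
 [::(1,1);(2,2);(3,5);(5,3);(6,6)];
 [::(1,1);(2,2);(3,7);(7,3);(5,5)];
 [::(1,1);(2,3);(3,2);(5,6);(6,5)];
 [::(1,1);(2,2);(3,3);(5,6);(6,5)];
 [::(1,1);(2,2);(3,3);(5,5);(6,6)];
 [::(1,2);(2,1);(3,12);(12,3)];
 [::(1,1);(2,2);(3,12);(12,3)];
 [::(1,1);(2,2);(3,3);(4,8);(8,4)];
 [::(1,1);(2,2);(3,3);(4,4);(7,7)];
 [::(1,1);(3,3);(5,7);(7,5)];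
 [::(1,1);(2,2);(3,6);(6,3);(4,5);(5,4)];
 [::(1,1);(2,2);(3,6);(6,3);(4,4);(5,5)]].
Definition Pgood n s := [&& is_wilf_partition n s, iota_fixed s & all (fun pm => A pm.1 && A pm.2) s].
Definition Pgood' n s := [&& [&& all (fun pm => (0 < pm.1) && (0 < pm.2)) s, uniq (map fst s)
    & sumn (map (fun pm => pm.1 * pm.2) s) == n] && uniq (map snd s), iota_fixed s & all (fun pm => A pm.1 && A pm.2) s].
Lemma PgoodE n s : Pgood n s = Pgood' n s.
Proof. by rewrite /Pgood /Pgood' /is_wilf_partition /is_partition_pm sumnE big_map. Qed.
Lemma small : all (fun n => (n \in [:: 2; 3; 7; 11; 15]) || Pgood n (nth [::] table n)) (iota 1 82).
Proof.
rewrite (@eq_all _ _ (fun n => (n \in [:: 2; 3; 7; 11; 15]) || Pgood' n (nth [::] table n))); last by move=> n; rewrite PgoodE.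
by vm_compute.
Qed.

Lemma A2 x : A (2 * x) = A x.
Proof.
rewrite /A; case: x => [//|x].
rewrite lognM // logn_prime // eqxx add1n expnS divnMl //.
Qed.

Definition dbl (s : seq (nat * nat)) := map (fun pm => (2 * pm.1, 2 * pm.2)) s.
Definition piece (r : nat) : seq (nat * nat) :=
  nth [::] [:: [::]; [:: (1,1)]; [:: (1,3); (3,1)]; [:: (3,3); (1,5); (5,1)]] r.
Definition pv (r : nat) := nth 0 [:: 0; 1; 6; 19] r.

Lemma notin_dbl x X : odd x -> (x \in map (muln 2) X) = false.
Proof.
move=> ox; apply/negP => /mapP [y _ ey]; move: ox; by rewrite ey oddM.
Qed.

Lemma hasn_dbl (P X : seq nat) : all odd P -> ~~ has (mem P) (map (muln 2) X).
Proof.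
move=> oP; apply/hasPn => x /mapP [y _ ->]; apply/negP => h.
by have := allP oP _ h; rewrite oddM.
Qed.

Lemma map_fst_dbl s : map fst (dbl s) = map (muln 2) (map fst s).
Proof. by rewrite /dbl -!map_comp. Qed.
Lemma map_snd_dbl s : map snd (dbl s) = map (muln 2) (map snd s).
Proof. by rewrite /dbl -!map_comp. Qed.

Lemma uniq_dbl X : uniq X -> uniq (map (muln 2) X).
Proof.
move=> u; rewrite map_inj_uniq // => a b /eqP; by rewrite eqn_pmul2l // => /eqP.
Qed.

Lemma step n s r : r < 4 -> Pgood n s -> Pgood (pv r + 4 * n) (piece r ++ dbl s).
Proof.
move=> hr /and3P [/andP [/and3P [pos un sm] un2] fx av].
apply/and3P; split.
- apply/andP; split; [apply/and3P; split|].
  + rewrite all_cat; apply/andP; split.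
      by case: r hr => [|[|[|[|]]]].
    rewrite /dbl all_map; apply/allP => pm /(allP pos) /= /andP [a b].
    by rewrite !muln_gt0 a b.
  + rewrite map_cat cat_uniq map_fst_dbl uniq_dbl // andbT.
    by rewrite hasn_dbl //; case: r hr => [|[|[|[|]]]].
  + rewrite big_cat /= /dbl big_map.
    have -> : \sum_(i <- s) (2 * i.1 * (2 * i.2)) = 4 * \sum_(i <- s) (i.1 * i.2).
      rewrite big_distrr /=; apply: eq_bigr => i _; lia.
    rewrite (eqP sm).
    by case: r hr => [|[|[|[|]]]] //= _; rewrite ?big_cons ?big_nil.
  + rewrite map_cat cat_uniq map_snd_dbl uniq_dbl // andbT.
    by rewrite hasn_dbl //; case: r hr => [|[|[|[|]]]].
- rewrite /iota_fixed all_cat; apply/andP; split.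
    apply/allP => pm hpm; rewrite mem_cat; apply/orP; left.
    by move: hpm; case: r hr => [|[|[|[|]]]] //= _; rewrite !inE;
      repeat (case/orP; first by move/eqP => ->);  move/eqP => ->.
  rewrite /dbl all_map; apply/allP => pm hpm /=.
  rewrite mem_cat; apply/orP; right.
  have := allP fx pm hpm => /= h.
  exact: (map_f (fun pm => (2 * pm.1, 2 * pm.2)) h).
- rewrite all_cat; apply/andP; split.
    by case: r hr => [|[|[|[|]]]].
  rewrite /dbl all_map; apply/allP => pm /(allP av) /=.
  by rewrite !A2.
Qed.

Lemma notexc m : 16 <= m -> m \notin [:: 2; 3; 7; 11; 15].
Proof.
move=> h; apply/negP; rewrite !inE => /orP[/eqP|/orP[/eqP|/orP[/eqP|/orP[/eqP|/eqP]]]]; lia.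
Qed.

Lemma main n : 0 < n -> n \notin [:: 2; 3; 7; 11; 15] -> exists s, Pgood n s.
Proof.
elim: n {-2}n (leqnn n) => [|N IH] n hn n0 ne; first lia.
case: (ltnP n 83) => hn83.
  exists (nth [::] table n).
  have := allP small n; rewrite mem_iota => /(_ _)/orP [].
    by apply/andP; split; lia.
    by move=> h; move: ne; rewrite h.
  done.
have [r [n' [hr en hn']]] : exists r n', [/\ r < 4, n = pv r + 4 * n' & 16 <= n'].
  have := divn_eq n 4; have := ltn_pmod n (isT : 0 < 4).
  set q := n %/ 4; set k := n %% 4 => hk eq.
  case: k hk eq => [|[|[|[|k]]]] // _ eq.
  - by exists 0, q; split => //; rewrite /pv /=; lia.
  - by exists 1, q; split => //; rewrite /pv /=; lia.
  - by exists 2, q.-1; split => //; rewrite /pv /=; lia.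
  - by exists 3, (q - 4); split => //; rewrite /pv /=; lia.
have [s hs] := IH n' ltac:(lia) ltac:(lia) (notexc _ hn').
by exists (piece r ++ dbl s); rewrite en; apply: step.
Qed.

Lemma count_bound m : count_upto A m <= 8 * (trunc_log 2 m).+1.
Proof.
rewrite /count_upto -size_filter.
set t := trunc_log 2 m.
have -> : 8 * t.+1 = size [seq o * expn 2 k | o <- iota 0 8, k <- iota 0 t.+1].
  by rewrite size_allpairs !size_iota.
apply: uniq_leq_size; first exact: filter_uniq (iota_uniq _ _).
move=> x; rewrite mem_filter => /andP [/andP [x0 x7] hx]; move: hx.
rewrite mem_iota => /andP [_ xm].
have dv : expn 2 (logn 2 x) %| x by rewrite -p_part dvdn_part.
have le1 : expn 2 (logn 2 x) <= m.
  have := dvdn_leq x0 dv; lia.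
have := trunc_log_max (isT : 1 < 2) le1; rewrite -/t => lt.
rewrite -(divnK dv); apply: (allpairs_f (fun o k => o * expn 2 k)); rewrite mem_iota; lia.
Qed.

Lemma powE m n : Nat.pow m n = expn m n.
Proof. by elim: n => //= n IH; rewrite expnS IH. Qed.

Lemma ln_le' x y : (0 < x)%R -> (x <= y)%R -> (ln x <= ln y)%R.
Proof.
move=> h1 h2; case: (Rle_lt_or_eq_dec x y h2) => h.
  by left; apply: ln_increasing.
by right; rewrite h.
Qed.

Theorem lemma2 :
  exists A : pred nat,
    (forall a, A a -> 0 < a) /\
    (forall n, 0 < n -> n \notin [:: 2; 3; 7; 11; 15] ->
       exists s : seq (nat * nat),
         [/\ is_wilf_partition n s, iota_fixed s
           & all (fun pm => A pm.1 && A pm.2) s]) /\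
    (exists (C : R) (M : nat), forall m : nat, (M <= m)%N ->
       Rle (INR (count_upto A m)) (Rmult C (ln (INR m)))).
Proof.
exists A; split; first by move=> a /andP [].
split.
  move=> n n0 ne; have [s hs] := main n n0 ne.
  by exists s; apply/and3P.
exists (Rdiv (INR 16) (ln (INR 2))), 2 => m hm.
set t := trunc_log 2 m.
have t1 : 0 < t by rewrite trunc_log_gt0.
have hp : expn 2 t <= m by have := trunc_log_bounds (isT : 1 < 2) (ltn_trans (isT : 0 < 1) hm) => /andP [].
have c1 : count_upto A m <= 16 * t.
  have := count_bound m; rewrite -/t; lia.
have L2 : (0 < ln (INR 2))%R.
  rewrite -ln_1; apply: ln_increasing; first lra.
  simpl; lra.
have R1 : (INR (count_upto A m) <= INR 16 * INR t)%R.
  rewrite -(mult_INR 16 t); apply: le_INR; apply/leP; exact: c1.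
have R2 : (INR t * ln (INR 2) <= ln (INR m))%R.
  rewrite -ln_pow; last by apply: lt_0_INR; apply/ltP.
  rewrite -pow_INR; apply: ln_le'.
    apply: lt_0_INR; apply/ltP; rewrite powE expn_gt0 //.
  apply: le_INR; apply/leP; rewrite powE; exact: hp.
have P16 : (0 <= INR 16)%R by apply: pos_INR.
apply: (Rle_trans _ _ _ R1).
have -> : (INR 16 * INR t = INR 16 / ln (INR 2) * (INR t * ln (INR 2)))%R.
  by field; apply: Rgt_not_eq.
apply: Rmult_le_compat_l; last exact: R2.
apply: Rmult_le_pos => //; left; apply: Rinv_0_lt_compat; exact: L2.
Qed.
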